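(* If $F$ has a derivative $F'(x_0)$ at a nega-$\tilde Q$-irrational point $x_0=\Delta^{-\tilde Q}_{i_1(x_0)i_2(x_0)\dots}$, then $$F'(x_0)=\lim_{n\to\infty}\prod_{j=1}^{n}\frac{\tilde p_{i_j(x_0),j}}{\tilde q_{i_j(x_0),j}}=\prod_{n=1}^{\infty}\frac{\tilde p_{i_n(x_0),n}}{\tilde q_{i_n(x_0),n}}.$$
   Context: Let $(m_n)_{n\ge1}$ be finite nonnegative integers and $\tilde Q=\|q_{i,n}\|$ ($i\in\{0,\dots,m_n\}$) with $q_{i,n}>0$, $\sum_{i}q_{i,n}=1$ for all $n$, and $\prod_n q_{i_n,n}=0$ for every digit sequence $(i_n)$. Put $a_{0,n}=0$, $a_{i,n}=\sum_{l<i}q_{l,n}$; $\Delta^{\tilde Q}_{j_1j_2\dots}=a_{j_1,1}+\sum_{n\ge2}a_{j_n,n}\prod_{l<n}q_{j_l,l}$. For odd $n$: $\tilde q_{i,n}=q_{i,n}$; for even $n$: $\tilde q_{i,n}=q_{m_n-i,n}$. The nega-$\tilde Q$-representation $x=\Delta^{-\tilde Q}_{i_1i_2\dots}$ means $x=\Delta^{\tilde Q}_{i_1[m_2-i_2]i_3[m_4-i_4]\dots}$; every $x\in[0,1]$ has one; numbers $\Delta^{-\tilde Q}_{i_1\dots i_nm_{n+1}0m_{n+3}0\dots}=\Delta^{-\tilde Q}_{i_1\dots[i_n-1]0m_{n+2}0m_{n+4}\dots}$ ($i_n\ne0$) have two representations and are nega-$\tilde Q$-rational; all other points have a unique representation and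 are nega-$\tilde Q$-irrational. Let $P=\|p_{i,n}\|$ have the same shape with $p_{i,n}\in(-1,1)$, $\sum_ip_{i,n}=1$, $\prod_n|p_{i_n,n}|=0$ for every digit sequence, $0<\sum_{i<c}p_{i,n}<1$ for $c\in\{1,\dots,m_n\}$. Put $\beta_{0,n}=0$, $\beta_{c,n}=\sum_{i<c}p_{i,n}$; for odd $n$: $\tilde p_{i,n}=p_{i,n}$, $\tilde\beta_{i,n}=\beta_{i,n}$; for even $n$: $\tilde p_{i,n}=p_{m_n-i,n}$, $\tilde\beta_{i,n}=\beta_{m_n-i,n}$. $F(x)=\beta_{i_1,1}+\sum_{k\ge2}\tilde\beta_{i_k,k}\prod_{j<k}\tilde p_{i_j,j}$ for $x=\Delta^{-\tilde Q}_{i_1i_2\dots}$. *)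

(* Defs.v *)
From Stdlib Require Import Reals.
From Coquelicot Require Import Coquelicot.
Open Scope R_scope.

(* Conventions: positions n are 1-based (n >= 1); the value of any
   sequence at index 0 is irrelevant.  Matrices are functions
   [q i n] = q_{i,n}; digit sequences are [d : nat -> nat]. *)

Fixpoint psum (f : nat -> R) (c : nat) : R :=
  match c with O => 0 | S c' => psum f c' + f c' end.

Fixpoint prodR (f : nat -> R) (N : nat) : R :=
  match N with O => 1 | S N' => prodR f N' * f (S N') end.

Definition valid_digits (m : nat -> nat) (d : nat -> nat) : Prop :=
  forall n, (1 <= n)%nat -> (d n <= m n)%nat.

Definition Qmatrix (m : nat -> nat) (q : nat -> nat -> R) : Prop :=
  (forall n i, (1 <= n)%nat -> (i <= m n)%nat -> 0 < q i n) /\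
  (forall n, (1 <= n)%nat -> psum (fun i => q i n) (S (m n)) = 1) /\
  (forall d, valid_digits m d ->
     is_lim_seq (fun N => prodR (fun n => q (d n) n) N) 0).

Definition Pmatrix (m : nat -> nat) (p : nat -> nat -> R) : Prop :=
  (forall n i, (1 <= n)%nat -> (i <= m n)%nat -> -1 < p i n < 1) /\
  (forall n, (1 <= n)%nat -> psum (fun i => p i n) (S (m n)) = 1) /\
  (forall d, valid_digits m d ->
     is_lim_seq (fun N => prodR (fun n => Rabs (p (d n) n)) N) 0) /\
  (forall n c, (1 <= n)%nat -> (1 <= c <= m n)%nat ->
     0 < psum (fun i => p i n) c < 1).

Definition a_coef (q : nat -> nat -> R) (i n : nat) : R := psum (fun l => q l n) i.

Definition DeltaQ (q : nat -> nat -> R) (j : nat -> nat) : R :=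
  Series (fun k => let n := S k in
            a_coef q (j n) n * prodR (fun l => q (j l) l) (pred n)).

(* digits of the Q~-representation corresponding to nega-digits d:
   i_n for odd n, m_n - i_n for even n *)
Definition nega_digits (m : nat -> nat) (d : nat -> nat) : nat -> nat :=
  fun n => if Nat.odd n then d n else (m n - d n)%nat.

Definition DeltaNegaQ (m : nat -> nat) (q : nat -> nat -> R) (d : nat -> nat) : R :=
  DeltaQ q (nega_digits m d).

Definition tilde (m : nat -> nat) (r : nat -> nat -> R) (i n : nat) : R :=
  if Nat.odd n then r i n else r (m n - i)%nat n.

Definition beta (p : nat -> nat -> R) (c n : nat) : R := psum (fun i => p i n) c.

Definition Fvalue (m : nat -> nat) (p : nat -> nat -> R) (d : nat -> nat) : R :=
  Series (fun k0 => let k := S k0 in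
            tilde m (beta p) (d k) k * prodR (fun j => tilde m p (d j) j) (pred k)).

Definition rational_tail (m : nat -> nat) (d : nat -> nat) (n : nat) : nat -> nat :=
  fun k => if (k <=? n)%nat then d k
           else if Nat.odd (k - n) then m k else 0%nat.

Definition nega_rational (m : nat -> nat) (q : nat -> nat -> R) (x : R) : Prop :=
  exists d n, valid_digits m d /\ (1 <= n)%nat /\ d n <> 0%nat /\
    x = DeltaNegaQ m q (rational_tail m d n).

Definition has_derivative_on01 (F : R -> R) (x0 l : R) : Prop :=
  filterlim (fun x => (F x - F x0) / (x - x0))
    (within (fun x => 0 <= x <= 1 /\ x <> x0) (locally x0)) (locally l).

(* Main.v *)
Require Import Defs.
From Stdlib Require Import Reals Lra Lia.
From Coquelicot Require Import Coquelicot.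
Open Scope R_scope.

Lemma sum_n_psum (t : nat -> R) N : sum_n t N = psum t (S N).
Proof.
  induction N as [|N IH].
  - rewrite sum_O. simpl. ring.
  - rewrite sum_Sn, IH. simpl. unfold plus; simpl. ring.
Qed.

Lemma is_series_psum (t : nat -> R) (l : R) :
  is_lim_seq (psum t) l -> is_series t l.
Proof.
  intro H. apply (is_lim_seq_incr_1 (psum t) l) in H.
  unfold is_series. 
  apply (is_lim_seq_ext (fun n => psum t (S n)) (sum_n t) l) in H.
  - exact H.
  - intro n; now rewrite sum_n_psum.
Qed.

Lemma psum_is_series (t : nat -> R) (l : R) :
  is_series t l -> is_lim_seq (psum t) l.
Proof.
  intro H. apply is_lim_seq_incr_1.
  apply (is_lim_seq_ext (sum_n t)). intro n; now rewrite sum_n_psum.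
  exact H.
Qed.

Lemma telesc (t P : nat -> R) n :
  is_lim_seq P 0 -> (forall k, (n <= k)%nat -> t k = P k - P (S k)) ->
  is_lim_seq (psum t) (psum t n + P n).
Proof.
  intros HP Ht.
  assert (E : forall N, (n <= N)%nat -> psum t N = psum t n + P n - P N).
  { intros N HN. induction HN as [|N HN IH]. ring. simpl. rewrite IH. rewrite (Ht N HN). ring. }
  apply (is_lim_seq_ext_loc (fun N => psum t n + P n - P N)).
  - exists n. intros N HN. now rewrite (E N HN).
  - assert (H := is_lim_seq_minus' _ _ _ _ (is_lim_seq_const (psum t n + P n)) HP).
    rewrite Rminus_0_r in H. exact H.
Qed.

Lemma prodR_ext f g N : (forall j, (1 <= j <= N)%nat -> f j = g j) -> prodR f N = prodR g N.
Proof.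
  induction N; intros H; simpl. reflexivity.
  rewrite IHN by (intros; apply H; lia). rewrite H by lia. reflexivity.
Qed.

Lemma psum_ext f g N : (forall j, (j < N)%nat -> f j = g j) -> psum f N = psum g N.
Proof.
  induction N; intros H; simpl. reflexivity.
  rewrite IHN by (intros; apply H; lia). rewrite H by lia. reflexivity.
Qed.

Lemma psum_mono f c c' : (forall i, (i < c')%nat -> 0 <= f i) -> (c <= c')%nat -> psum f c <= psum f c'.
Proof.
  intros Hf H. induction H. lra. simpl.
  assert (0 <= f m) by (apply Hf; lia).
  assert (psum f c <= psum f m) by (apply IHle; intros; apply Hf; lia). lra.
Qed.

Lemma prodR_abs f N : prodR (fun j => Rabs (f j)) N = Rabs (prodR f N).
Proof. induction N; simpl. now rewrite Rabs_R1. rewrite IHN, Rabs_mult. reflexivity. Qed.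

Lemma prodR_div f g N : prodR (fun j => f j / g j) N = prodR f N / prodR g N.
Proof. induction N; simpl. field. rewrite IHN. unfold Rdiv. rewrite Rinv_mult. ring. Qed.

Lemma prodR_pos f N : (forall j, (1 <= j <= N)%nat -> 0 < f j) -> 0 < prodR f N.
Proof. induction N; intros H; simpl. lra. apply Rmult_lt_0_compat. apply IHN; intros; apply H; lia. apply H; lia. Qed.

Definition term (r : nat -> nat -> R) (X : nat -> nat) (k : nat) : R :=
  a_coef r (X (S k)) (S k) * prodR (fun l => r (X l) l) k.

Lemma DeltaQ_term r X : DeltaQ r X = Series (term r X).
Proof. reflexivity. Qed.

Lemma DeltaQ_ext r X Y : (forall k, (1 <= k)%nat -> X k = Y k) -> DeltaQ r X = DeltaQ r Y.
Proof.
  intro H. unfold DeltaQ. apply Series_ext. intro n. simpl.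
  rewrite H by lia. f_equal. apply prodR_ext. intros; rewrite H by lia; reflexivity.
Qed.
Definition Acut (D : nat -> nat) n k : nat := if (k <=? n)%nat then D k else 0%nat.
Definition Bcut (m D : nat -> nat) n k : nat := if (k <=? n)%nat then D k else m k.

Lemma term_cut_eq (r : nat -> nat -> R) (D X : nat -> nat) n k : (forall j, (j <= n)%nat -> X j = D j) -> (k < n)%nat -> term r X k = term r D k.
Proof.
  intros H Hk. unfold term. rewrite H by lia. f_equal. apply prodR_ext. intros; rewrite H by lia; reflexivity.
Qed.

Lemma prodR_cut_eq (r : nat -> nat -> R) (D X : nat -> nat) n : (forall j, (j <= n)%nat -> X j = D j) ->
  prodR (fun l => r (X l) l) n = prodR (fun l => r (D l) l) n.
Proof. intros H. apply prodR_ext. intros; rewrite H by lia; reflexivity. Qed.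

Lemma series_A (r : nat -> nat -> R) (D : nat -> nat) n : is_series (term r (Acut D n)) (psum (term r D) n).
Proof.
  apply is_series_psum.
  assert (Hs : psum (term r (Acut D n)) n = psum (term r D) n).
  { apply psum_ext. intros j Hj. apply term_cut_eq with n; auto.
    intros i Hi. unfold Acut. replace (i <=? n)%nat with true; auto. symmetry; apply Nat.leb_le; lia. }
  rewrite <- Hs.
  assert (Ht : forall k, (n <= k)%nat -> term r (Acut D n) k = (fun _ => 0) k - (fun _ => 0) (S k)).
  { intros k Hk. unfold term, Acut. replace (S k <=? n)%nat with false.
    unfold a_coef. simpl. ring. symmetry; apply Nat.leb_gt; lia. }
  pose proof (telesc (term r (Acut D n)) (fun _ => 0) n (is_lim_seq_const 0) Ht) as H.
  rewrite Rplus_0_r in H. exact H.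
Qed.

Lemma valid_Bcut m D n : valid_digits m D -> valid_digits m (Bcut m D n).
Proof. intros H k Hk. unfold Bcut. destruct (k <=? n)%nat; auto. Qed.
Lemma valid_Acut m D n : valid_digits m D -> valid_digits m (Acut D n).
Proof. intros H k Hk. unfold Acut. destruct (k <=? n)%nat; auto; lia. Qed.

Lemma series_B (m : nat -> nat) (r : nat -> nat -> R) (D : nat -> nat) n :
  valid_digits m D ->
  (forall n, (1 <= n)%nat -> psum (fun i => r i n) (S (m n)) = 1) ->
  (forall X, valid_digits m X -> is_lim_seq (fun N => prodR (fun n => r (X n) n) N) 0) ->
  is_series (term r (Bcut m D n)) (psum (term r D) n + prodR (fun l => r (D l) l) n).
Proof.
  intros HD Hs Hl. apply is_series_psum.
  assert (Hc : forall j, (j <= n)%nat -> Bcut m D n j = D j).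
  { intros i Hi. unfold Bcut. replace (i <=? n)%nat with true; auto. symmetry; apply Nat.leb_le; lia. }
  assert (Hs' : psum (term r (Bcut m D n)) n = psum (term r D) n).
  { apply psum_ext. intros j Hj. apply term_cut_eq with n; auto. }
  rewrite <- Hs', <- (prodR_cut_eq r D (Bcut m D n) n Hc).
  apply telesc. apply Hl. apply valid_Bcut; auto.
  intros k Hk.
  assert (HB : Bcut m D n (S k) = m (S k)).
  { unfold Bcut. replace (S k <=? n)%nat with false; auto. symmetry; apply Nat.leb_gt; lia. }
  unfold term. simpl. rewrite HB.
  unfold a_coef. specialize (Hs (S k) ltac:(lia)). simpl in Hs.
  replace (psum (fun l : nat => r l (S k)) (m (S k))) with (1 - r (m (S k)) (S k)) by lra. ring.
Qed.
Lemma series_D_bounds (m : nat -> nat) (q : nat -> nat -> R) (D : nat -> nat) n :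
  valid_digits m D -> Qmatrix m q ->
  psum (term q D) n <= DeltaQ q D <= psum (term q D) n + prodR (fun l => q (D l) l) n.
Proof.
  intros HD [Hpos [Hs Hl]].
  set (P := fun N => prodR (fun l => q (D l) l) N).
  assert (HP0 : forall N, 0 < P N).
  { intro N. apply prodR_pos. intros j Hj. apply Hpos. lia. apply HD. lia. }
  assert (Hnn : forall k, 0 <= term q D k).
  { intro k. unfold term. apply Rmult_le_pos. unfold a_coef.
    apply Rle_trans with (psum (fun l => q l (S k)) 0). simpl; lra.
    apply psum_mono. intros i Hi. left. apply Hpos. lia. pose proof (HD (S k)); lia. lia.
    left. apply HP0. }
  assert (Hle : forall k, term q D k <= P k - P (S k)).
  { intro k. unfold term. fold (P k). unfold P at 2. simpl. fold (P k).
    assert (a_coef q (D (S k)) (S k) + q (D (S k)) (S k) <= 1).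
    { rewrite <- (Hs (S k)) by lia. unfold a_coef.
      change (psum (fun l => q l (S k)) (S (D (S k))) <= psum (fun i => q i (S k)) (S (m (S k)))).
      apply psum_mono. intros i Hi. left. apply Hpos. lia. lia. pose proof (HD (S k)); lia. }
    replace (P (S k)) with (P k * q (D (S k)) (S k)) by reflexivity. specialize (HP0 k). nra. }
  assert (Hex : ex_series (term q D)).
  { apply (@ex_series_le R_AbsRing R_CompleteNormedModule _ (fun k => P k - P (S k))).
    intro k. unfold norm; simpl. unfold abs; simpl. rewrite Rabs_pos_eq by apply Hnn. apply Hle.
    eexists. apply is_series_psum. apply (telesc _ P 0). apply Hl. auto. intros; reflexivity. }
  assert (Hlim : is_lim_seq (psum (term q D)) (DeltaQ q D)).
  { apply psum_is_series. apply Series_correct. exact Hex. }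
  split.
  - assert (H := is_lim_seq_le_loc (fun _ => psum (term q D) n) (psum (term q D)) _ _
      ltac:(exists n; intros N HN; apply psum_mono; auto) (is_lim_seq_const _) Hlim).
    simpl in H. exact H.
  - assert (Hup : forall N, (n <= N)%nat -> psum (term q D) N <= psum (term q D) n + P n - P N).
    { intros N HN. induction HN as [|N HN IH]. lra. simpl. specialize (Hle N). lra. }
    assert (H := is_lim_seq_le_loc (psum (term q D)) (fun _ => psum (term q D) n + P n) _ _
      ltac:(exists n; intros N HN; specialize (Hup N HN); specialize (HP0 N); lra) Hlim (is_lim_seq_const _)).
    simpl in H. exact H.
Qed.
Lemma nega_invol m X k : valid_digits m X -> (1 <= k)%nat -> nega_digits m (nega_digits m X) k = X k.
Proof.
  intros HX Hk. unfold nega_digits. destruct (Nat.odd k); auto. specialize (HX k Hk). lia.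
Qed.

Lemma valid_nega m X : valid_digits m X -> valid_digits m (nega_digits m X).
Proof. intros HX k Hk. unfold nega_digits. destruct (Nat.odd k); auto. lia. Qed.

Lemma tilde_nega m (r : nat -> nat -> R) d j : tilde m r (d j) j = r (nega_digits m d j) j.
Proof. unfold tilde, nega_digits. destruct (Nat.odd j); reflexivity. Qed.

Lemma Fvalue_eq m p d : Fvalue m p d = DeltaQ p (nega_digits m d).
Proof.
  unfold Fvalue, DeltaQ. apply Series_ext. intro k. simpl.
  f_equal. unfold tilde, beta, a_coef, nega_digits. destruct (Nat.odd (S k)); reflexivity.
  apply prodR_ext. intros; apply tilde_nega.
Qed.

Lemma deriv_est (F : R -> R) x0 l : has_derivative_on01 F x0 l ->
  forall eps, 0 < eps -> exists delta, 0 < delta /\ forall y, 0 <= y <= 1 -> Rabs (y - x0) < delta ->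
    Rabs (F y - F x0 - l * (y - x0)) <= eps * Rabs (y - x0).
Proof.
  intros H eps He.
  assert (HL : locally l (fun z => Rabs (z - l) < eps)).
  { exists (mkposreal eps He). intros y Hy. exact Hy. }
  specialize (H _ HL). destruct H as [[delta Hd] Hdel].
  exists delta. split. exact Hd. intros y Hy Hyd.
  destruct (Req_dec y x0) as [E|E].
  - subst. replace (x0 - x0) with 0 by ring. rewrite Rabs_R0. replace (F x0 - F x0 - l * 0) with 0 by ring.
    rewrite Rabs_R0. lra.
  - specialize (Hdel y Hyd (conj Hy E)). simpl in Hdel.
    assert (Hne : y - x0 <> 0) by lra.
    replace (F y - F x0 - l * (y - x0)) with (((F y - F x0) / (y - x0) - l) * (y - x0)) by (field; exact Hne).
    rewrite Rabs_mult. apply Rmult_le_compat_r. apply Rabs_pos. lra.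
Qed.
Theorem mainTheorem8
  (m : nat -> nat) (q p : nat -> nat -> R) (F : R -> R)
  (HQ : Qmatrix m q) (HP : Pmatrix m p)
  (HF : forall d, valid_digits m d -> F (DeltaNegaQ m q d) = Fvalue m p d)
  (d : nat -> nat) (Hd : valid_digits m d)
  (Hirr : ~ nega_rational m q (DeltaNegaQ m q d))
  (l : R) (Hder : has_derivative_on01 F (DeltaNegaQ m q d) l) :
  is_lim_seq (fun N => prodR (fun j => tilde m p (d j) j / tilde m q (d j) j) N) l.
Proof.
  set (D := nega_digits m d).
  assert (HD : valid_digits m D) by (apply valid_nega; auto).
  assert (Hx0 : DeltaNegaQ m q d = DeltaQ q D) by reflexivity.
  rewrite Hx0 in Hder. clear Hirr.
  assert (HFX : forall X, valid_digits m X -> F (DeltaQ q X) = DeltaQ p X).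
  { intros X HX. rewrite (DeltaQ_ext q X (nega_digits m (nega_digits m X))).
    change (F (DeltaNegaQ m q (nega_digits m X)) = DeltaQ p X).
    rewrite HF by (apply valid_nega; auto). rewrite Fvalue_eq.
    apply DeltaQ_ext. intros; apply nega_invol; auto.
    intros; symmetry; apply nega_invol; auto. }
  destruct HQ as [Qpos [Qs Ql]]. destruct HP as [Ppos [Ps [Pl Pc]]].
  assert (Pl' : forall X, valid_digits m X -> is_lim_seq (fun N => prodR (fun n => p (X n) n) N) 0).
  { intros X HX. apply is_lim_seq_abs_0. apply (is_lim_seq_ext (fun N => prodR (fun n => Rabs (p (X n) n)) N)).
    intro; apply prodR_abs. apply Pl; auto. }
  set (Pq := fun N => prodR (fun l => q (D l) l) N).
  set (Pp := fun N => prodR (fun l => p (D l) l) N).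
  assert (HPq : forall N, 0 < Pq N).
  { intro N. apply prodR_pos. intros j Hj. apply Qpos. lia. apply HD. lia. }
  assert (Hratio : forall N, prodR (fun j => tilde m p (d j) j / tilde m q (d j) j) N = Pp N / Pq N).
  { intro N. unfold Pp, Pq. rewrite <- prodR_div. apply prodR_ext. intros. rewrite !tilde_nega. reflexivity. }
  apply is_lim_seq_ext with (fun N => Pp N / Pq N). intro; symmetry; apply Hratio.
  apply is_lim_seq_spec. intros [eps He]. simpl.
  destruct (deriv_est F _ l Hder (eps/2) ltac:(lra)) as [delta [Hdel Hest]].
  assert (HlimQ := Ql D HD). apply is_lim_seq_spec in HlimQ.
  destruct (HlimQ (mkposreal delta Hdel)) as [N0 HN0].
  exists N0. intros n Hn. specialize (HN0 n Hn). simpl in HN0.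
  fold (Pq n) in HN0. rewrite Rminus_0_r, Rabs_pos_eq in HN0 by (left; apply HPq).
  set (x0 := DeltaQ q D).
  assert (HQv := series_D_bounds m q D n HD (conj Qpos (conj Qs Ql))). fold x0 in HQv. fold (Pq n) in HQv.
  assert (HaQ : DeltaQ q (Acut D n) = psum (term q D) n) by (apply is_series_unique, series_A).
  assert (HaP : DeltaQ p (Acut D n) = psum (term p D) n) by (apply is_series_unique, series_A).
  assert (HbQ : DeltaQ q (Bcut m D n) = psum (term q D) n + Pq n)
    by (apply is_series_unique, series_B; auto).
  assert (HbP : DeltaQ p (Bcut m D n) = psum (term p D) n + Pp n)
    by (apply is_series_unique, series_B; auto).
  assert (HA0 := series_D_bounds m q (Acut D n) 0 (valid_Acut m D n HD) (conj Qpos (conj Qs Ql))).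
  assert (HB0 := series_D_bounds m q (Bcut m D n) 0 (valid_Bcut m D n HD) (conj Qpos (conj Qs Ql))).
  simpl in HA0, HB0.
  set (a := psum (term q D) n) in *.
  assert (Ea := Hest (DeltaQ q (Acut D n))). assert (Eb := Hest (DeltaQ q (Bcut m D n))).
  rewrite (HFX _ (valid_Acut m D n HD)), HaP in Ea.
  rewrite (HFX _ (valid_Bcut m D n HD)), HbP in Eb.
  rewrite HaQ in Ea, HA0. rewrite HbQ in Eb, HB0.
  fold x0 in Ea, Eb.
  specialize (Ea ltac:(lra)). specialize (Eb ltac:(lra)).
  rewrite (Rabs_left1 (a - x0)) in Ea by lra. rewrite (Rabs_pos_eq (a + Pq n - x0)) in Eb by lra.
  specialize (Ea ltac:(lra)). specialize (Eb ltac:(lra)).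
  set (b := psum (term p D) n) in *.
  set (Fx := F x0) in *.
  assert (Hq := HPq n).
  replace (Pp n / Pq n - l) with ((b + Pp n - Fx - l * (a + Pq n - x0)) / Pq n + (- (b - Fx - l * (a - x0))) / Pq n)
    by (field; lra).
  eapply Rle_lt_trans. apply Rabs_triang.
  rewrite !Rabs_div by lra. rewrite Rabs_Ropp. rewrite (Rabs_pos_eq (Pq n)) by lra.
  apply Rmult_lt_reg_r with (Pq n). lra.
  rewrite Rmult_plus_distr_r. unfold Rdiv. rewrite !Rmult_assoc, !Rinv_l by lra. nra.
Qed.
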